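(* Let $k\ge2$, let $\mathcal{F}\subset 2^{[n]}$ be weakly $k$-cross-free, and let $0\le a\le b\le\log n$ be reals. For each integer $i$ with $a<i\le b$ let $\Gamma_i$ be a collection of pairwise disjoint nonempty chains contained in $\mathcal{F}_i$ such that $\{\max\mathcal{C}:\mathcal{C}\in\Gamma_i\}$ is an antichain, and let $\Gamma_{a,b}=\bigcup_{a<i\le b}\Gamma_i$. For each $\mathcal{C}\in\Gamma_{a,b}$ fix a set $Y(\mathcal{C})$ as described in the context, and for $y\in[n]$ let $d(y)$ be the number of chains $\mathcal{C}\in\Gamma_{a,b}$ with $y\in Y(\mathcal{C})$ and $g(y)$ the number of $k$-tuples of chains in $\Gamma_{a,b}$ that are good for $y$. Then for every $y\in[n]$, $$g(y)\geq \binom{d(y)/(k-1)^{2}}{k}.$$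
   Context: Sets $A,B$ are weakly crossing if $A\setminus B$, $B\setminus A$, $A\cap B$ are all non-empty; a family is weakly $k$-cross-free if it contains no $k$ pairwise weakly crossing sets. $\mathcal{F}_i=\{X\in\mathcal{F}:2^i<|X|\le 2^{i+1}\}$. A chain $\mathcal{C}$ is written $\mathcal{C}(1)\subsetneq\dots\subsetneq\mathcal{C}(l)$, $\min\mathcal{C}=\mathcal{C}(1)$, $\max\mathcal{C}=\mathcal{C}(l)$. $Y(\mathcal{C})$ is a set obtained by choosing one element of $\mathcal{C}(1)$ and one element of each difference $\mathcal{C}(j+1)\setminus\mathcal{C}(j)$, $j=1,\dots,l-1$ (so $|Y(\mathcal{C})|=|\mathcal{C}|$). A $k$-tuple $(\mathcal{C}_1,\dots,\mathcal{C}_k)$ of chains in $\Gamma_{a,b}$ with $\mathcal{C}_l\in\Gamma_{j_l}$ for some $j_1<\dots<j_k$ is good for $y$ if (i) $y\in Y(\mathcal{C}_l)$ for all $l\in[k]$, and (ii) letting $C_l$ be the smallest set of $\mathcal{C}_l$ containing $y$, we have $C_1\subset\dots\subset C_k$. Extended binomial coefficient: for real $x$, $\binom{x}{k}=x(x-1)\cdots(x-k+1)/k!$ if $x\ge k-1$ and $0$ otherwise. *)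

(* Defs.v *)
From Stdlib Require Import Rdefinitions Raxioms RIneq Rpower Classical ClassicalDescription.
From HB Require Import structures.
From mathcomp Require Import all_boot all_order all_algebra.
Set Implicit Arguments. Unset Strict Implicit. Unset Printing Implicit Defensive.
Import Order.TTheory GRing.Theory Num.Theory.

Definition pbool (P : Prop) : bool :=
  if excluded_middle_informative P then true else false.

Section Defs.
Variable n : nat.
Notation fam := {set {set 'I_n}}.

Definition wcross (A B : {set 'I_n}) : Prop :=
  A :\: B != set0 /\ B :\: A != set0 /\ A :&: B != set0.

Definition weakly_k_cross_free (k : nat) (F : fam) : Prop :=
  forall S : fam, S \subset F -> #|S| = k ->
    ~ (forall A B, A \in S -> B \in S -> A != B -> wcross A B).

Definition level (F : fam) (i : nat) : fam :=
  [set X in F | (2 ^ i < #|X|) && (#|X| <= 2 ^ i.+1)].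

Definition is_chain (C : fam) : Prop :=
  forall X Y, X \in C -> Y \in C -> (X \subset Y) || (Y \subset X).

(* max of a nonempty finite chain = union of its members *)
Definition chain_max (C : fam) : {set 'I_n} := \bigcup_(X in C) X.

(* smallest member of the chain C containing y (intersection of those) *)
Definition chain_min_cont (C : fam) (y : 'I_n) : {set 'I_n} :=
  \bigcap_(X in C | y \in X) X.

(* Y is obtained from the chain C(1) < ... < C(l) by choosing one element of
   C(1) and one element of each C(j+1) \ C(j) : i.e. Y lies in max C and meets
   each "layer" X \ (union of members strictly below X) in exactly one point. *)
Definition Y_of_chain (C : fam) (Y : {set 'I_n}) : Prop :=
  Y \subset chain_max C /\
  forall X, X \in C ->
    #|Y :&: (X :\: \bigcup_(Z in C | Z \proper X) Z)| = 1%N.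

Definition ext_binom (x : rat) (k : nat) : rat :=
  (if (k.-1)%:R <= x then (\prod_(i < k) (x - i%:R)) / (k`!)%:R else 0)%R.

End Defs.

(* Main.v *)
Require Import Defs.
From Stdlib Require Import ClassicalDescription ClassicalEpsilon.
From Stdlib Require Import Lia.
From mathcomp Require Import zify.
From Stdlib Require Import Rdefinitions Raxioms RIneq Rpower.
From HB Require Import structures.
From mathcomp Require Import all_boot all_order all_algebra.
Import Order.TTheory GRing.Theory Num.Theory.
Set Implicit Arguments. Unset Strict Implicit.

Lemma chain_argmin n (C : {set {set 'I_n}}) (P : pred {set 'I_n}) :
  is_chain C -> (exists X, (X \in C) && P X) ->
  exists2 X, (X \in C) && P X & forall Z, (Z \in C) && P Z -> X \subset Z.
Proof.
move=> hc [X0 hX0].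
case: (arg_minnP (fun X : {set 'I_n} => #|X|) (hX0 : [pred X | (X \in C) && P X] X0)) => X hX hmin.
exists X => // Z hZ.
case/andP: (hX) => XC _; case/andP: (hZ) => ZC _.
case/orP: (hc X Z XC ZC) => // hZX.
have := hmin Z hZ => hle.
suff -> : X = Z by [].
by apply/eqP; rewrite eq_sym eqEcard hZX.
Qed.

Lemma chain_argmax n (C : {set {set 'I_n}}) :
  is_chain C -> C != set0 ->
  exists2 X, X \in C & forall Z, Z \in C -> Z \subset X.
Proof.
move=> hc /set0Pn [X0 hX0].
case: (arg_maxnP (fun X : {set 'I_n} => #|X|) (hX0 : X0 \in [pred X | X \in C])) => X hX hmax.
exists X => // Z hZ.
case/orP: (hc X Z hX hZ) => // hXZ.
have := hmax Z hZ => hle.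
suff -> : X = Z by [].
by apply/eqP; rewrite eqEcard hXZ.
Qed.

Lemma chain_max_in n (C : {set {set 'I_n}}) :
  is_chain C -> C != set0 -> chain_max C \in C.
Proof.
move=> hc hne; case: (chain_argmax hc hne) => X hX hm.
suff -> : chain_max C = X by [].
apply/eqP; rewrite eqEsubset; apply/andP; split.
  by apply/bigcupsP => Z hZ; exact: hm.
exact: (bigcup_sup X hX).
Qed.

Lemma chain_min_in n (C : {set {set 'I_n}}) (y : 'I_n) :
  is_chain C -> y \in chain_max C ->
  chain_min_cont C y \in C /\ y \in chain_min_cont C y.
Proof.
move=> hc /bigcupP [X0 h0 hy0].
case: (@chain_argmin n C (fun X => y \in X) hc).
  by exists X0; rewrite h0.
move=> X /andP [XC yX] hm.
suff -> : chain_min_cont C y = X by [].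
apply/eqP; rewrite eqEsubset; apply/andP; split.
  by apply: bigcap_inf; rewrite XC.
apply/bigcapsP => Z hZ; exact: hm.
Qed.
Lemma no_big_antichain n k (F : {set {set 'I_n}}) (y : 'I_n) (X : finType)
  (A : {set X}) (f : X -> {set 'I_n}) :
  weakly_k_cross_free k F ->
  (forall x, x \in A -> f x \in F /\ y \in f x) ->
  (forall x x', x \in A -> x' \in A -> x != x' -> ~~ (f x \subset f x')) ->
  (#|A| < k)%N.
Proof.
move=> hF hfA hinc; rewrite ltnNge; apply/negP => /card_geqP [s [us ss sA]].
have sA' : forall x, x \in s -> x \in A by move=> x /sA.
have inj : {in [set x in s] &, injective f}.
  move=> x x'; rewrite !inE => xs x's e; apply/eqP; apply/negPn/negP => ne.
  by move: (hinc x x' (sA' _ xs) (sA' _ x's) ne); rewrite e subxx.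
apply: (hF (f @: [set x in s])).
- apply/subsetP => Z /imsetP [x]; rewrite inE => xs ->; exact: (hfA x (sA' _ xs)).1.
- by rewrite card_in_imset // cardsE (card_uniqP us).
move=> A1 B1 /imsetP [x]; rewrite inE => xs -> /imsetP [x']; rewrite inE => x's -> ne.
have nx : x != x' by apply: contraNneq ne => ->.
split; last split.
- by rewrite setD_eq0; apply: hinc => //; apply: sA'.
- by rewrite setD_eq0; apply: hinc; rewrite 1?eq_sym //; apply: sA'.
- apply/set0Pn; exists y; rewrite inE.
  by rewrite (hfA x (sA' _ xs)).2 (hfA x' (sA' _ x's)).2.
Qed.

Lemma lev_card_lt (s t i j : nat) :
  (2 ^ i < s)%N -> (t <= 2 ^ j.+1)%N -> (j < i)%N -> (t < s)%N.
Proof.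
move=> h1 h2 h3; apply: (leq_ltn_trans h2); apply: (leq_ltn_trans _ h1).
by rewrite leq_exp2l.
Qed.

Lemma lev_uniq (s i j : nat) :
  (2 ^ i < s)%N -> (s <= 2 ^ i.+1)%N -> (2 ^ j < s)%N -> (s <= 2 ^ j.+1)%N -> i = j.
Proof.
move=> a1 a2 b1 b2; apply/eqP; rewrite eqn_leq; apply/andP; split; rewrite leqNgt;
 apply/negP => h.
- by have := lev_card_lt a1 b2 h; rewrite ltnn.
- by have := lev_card_lt b1 a2 h; rewrite ltnn.
Qed.

Local Open Scope ring_scope.
Lemma ext_binom_le (k H : nat) (x : rat) : (x <= H%:R) ->
  ext_binom x k <= ('C(H, k))%:R.
Proof.
move=> xH; rewrite /ext_binom; case: ifP => hk; last by rewrite ler0n.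
have kH : (k.-1 <= H)%N by rewrite -(ler_nat rat); apply: le_trans xH.
have -> : ('C(H, k))%:R = (\prod_(i < k) (H%:R - i%:R)) / (k`!)%:R :> rat.
  rewrite -[LHS](@mulfK _ (k`!)%:R) ?pnatr_eq0 -?lt0n ?fact_gt0 //; congr (_ / _).
  rewrite -natrM bin_ffact ffact_prod natr_prod; apply: eq_bigr => i _.
  rewrite natrB //; apply: leq_trans kH; rewrite -ltnS (leq_trans (ltn_ord i)) ?leqSpred.
1,2: done.
apply: ler_wpM2r; first by rewrite invr_ge0 ler0n.
apply: ler_prod => i _; apply/andP; split.
  rewrite subr_ge0; apply: le_trans hk; rewrite ler_nat.
  by rewrite -ltnS (leq_trans (ltn_ord i)) ?leqSpred.
by rewrite lerD2r.
Qed.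
Local Close Scope ring_scope.

Lemma pbP (Q : Prop) : pbool Q -> Q.
Proof. rewrite /pbool; destruct (ClassicalDescription.excluded_middle_informative Q) as [q|q] => /= h. exact q. unfold is_true in h; discriminate h. Qed.
Lemma Ppb (Q : Prop) : Q -> pbool Q.
Proof. rewrite /pbool; destruct (ClassicalDescription.excluded_middle_informative Q) as [q|q] => /= h. reflexivity. case: (q h). Qed.


Unset Implicit Arguments.
Unset Strict Implicit.
Theorem claim3 (n k : nat) (F : {set {set 'I_n}}) (a b : R)
  (Gamma : nat -> {set {set {set 'I_n}}})
  (Y : {set {set 'I_n}} -> {set 'I_n}) :
  (2 <= k)%N ->
  weakly_k_cross_free k F ->
  Rle R0 a -> Rle a b -> Rle b (Rdiv (ln (INR n)) (ln (INR 2))) ->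
  (forall i : nat, Rlt a (INR i) -> Rle (INR i) b ->
     (forall C, C \in Gamma i ->
        [/\ C != set0, is_chain C & C \subset level F i]) /\
     (forall C C', C \in Gamma i -> C' \in Gamma i -> C != C' ->
        [disjoint C & C']) /\
     (forall C C', C \in Gamma i -> C' \in Gamma i ->
        chain_max C \subset chain_max C' -> chain_max C = chain_max C')) ->
  let Gab : {set {set {set 'I_n}}} :=
    [set C | pbool (exists i : nat,
                      [/\ Rlt a (INR i), Rle (INR i) b & C \in Gamma i])] in
  (forall C, C \in Gab -> Y_of_chain C (Y C)) ->
  let d (y : 'I_n) : nat := #|[set C in Gab | y \in Y C]| in
  let good (y : 'I_n) (t : {ffun 'I_k -> {set {set 'I_n}}}) : Prop :=
    (exists j : 'I_k -> nat,
        (forall l l' : 'I_k, (l < l')%N -> (j l < j l')%N) /\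
        (forall l, [/\ Rlt a (INR (j l)), Rle (INR (j l)) b
                     & t l \in Gamma (j l)])) /\
    (forall l, y \in Y (t l)) /\
    (forall l l' : 'I_k, (l <= l')%N ->
        chain_min_cont (t l) y \subset chain_min_cont (t l') y) in
  let g (y : 'I_n) : nat := #|[set t | pbool (good y t)]| in
  forall y : 'I_n,
    (ext_binom ((d y)%:R / ((k.-1) ^ 2)%:R) k <= (g y)%:R)%R.
Proof.
move=> hk hF ha hab hb hG Gab hY d good g y.
pose P := fun C i => [/\ Rlt a (INR i), Rle (INR i) b & C \in Gamma i].
have Pex : forall C, C \in Gab -> exists i, P C i.
  by move=> C; rewrite /Gab inE => /pbP.
pose lev := fun C => match excluded_middle_informative (exists i, P C i) with
  | left h => proj1_sig (constructive_indefinite_description _ h)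
  | right _ => 0%N end.
have levP : forall C, C \in Gab -> P C (lev C).
  move=> C hC; rewrite /lev; destruct (excluded_middle_informative (exists i, P C i)) as [h|h];
    last by case: h; exact: Pex.
  exact: (proj2_sig (constructive_indefinite_description _ h)).
have hGC : forall C, C \in Gab ->
    [/\ C != set0, is_chain C & C \subset level F (lev C)].
  by move=> C /levP [h1 h2 h3]; apply: (hG _ h1 h2).1.
have lvl : forall X i, X \in level F i ->
    [/\ X \in F, (2 ^ i < #|X|)%N & (#|X| <= 2 ^ i.+1)%N].
  by move=> X i; rewrite inE => /andP [-> /andP [-> ->]].
have levU : forall C i, C \in Gab -> P C i -> i = lev C.
  move=> C i hC [h1 h2 h3].
  have [ne1 _ sub1] := (hG i h1 h2).1 C h3.
  have [ne2 _ sub2] := hGC C hC.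
  case/set0Pn: ne1 => X XC.
  have [_ a1 a2] := lvl X _ (subsetP sub1 X XC).
  have [_ b1 b2] := lvl X _ (subsetP sub2 X XC).
  exact: lev_uniq a1 a2 b1 b2.
have levn : forall C, C \in Gab -> (lev C < n)%N.
  move=> C hC; have [ne _ sub] := hGC C hC.
  case/set0Pn: ne => X XC; have [_ a1 _] := lvl X _ (subsetP sub X XC).
  apply: leq_trans (ltn_expl _ (isT : (1 < 2)%N)) _.
  apply: ltnW; apply: (leq_trans a1); apply: leq_trans (max_card _) _; by rewrite card_ord.
pose D := [set C in Gab | y \in Y C].
pose cy := fun C => chain_min_cont C y.
pose cm := fun C : {set {set 'I_n}} => chain_max C.
have DP : forall C, C \in D -> [/\ C \in Gab, y \in Y C,
    [/\ cm C \in C, y \in cm C & cm C \in level F (lev C)] &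
    [/\ cy C \in C, y \in cy C & cy C \in level F (lev C)]].
  move=> C; rewrite inE => /andP [hC hy].
  have [ne ch sub] := hGC C hC.
  have [YC _] := hY C hC.
  have ym : y \in cm C by apply: (subsetP YC).
  have cmC : cm C \in C by exact: chain_max_in.
  have [cyC yy] := chain_min_in ch ym.
  split=> //; split=> //; exact: (subsetP sub).
pose lt := fun C C' => (lev C < lev C')%N && (cy C \subset cy C').
have lt_trans : transitive lt.
  move=> C2 C1 C3 /andP [a1 a2] /andP [b1 b2]; apply/andP; split.
    exact: ltn_trans a1 b1.
  exact: subset_trans a2 b2.
have perlevel : forall A : {set {set {set 'I_n}}}, A \subset D ->
    (forall C C', C \in A -> C' \in A -> lev C = lev C') -> (#|A| < k)%N.
  move=> A AD hl; apply: (@no_big_antichain n k F y _ A cm hF).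
    move=> x /(subsetP AD) /DP [_ _ [_ h1 /lvl [h2 _ _]] _]; by split.
  move=> C C' CA C'A ne; apply/negP => hsub.
  have /DP [CG _ [cmC _ _] _] := subsetP AD C CA.
  have /DP [C'G _ [cmC' _ _] _] := subsetP AD C' C'A.
  have [p1 p2 p3] := levP C CG; have [q1 q2 q3] := levP C' C'G.
  rewrite (hl C' C C'A CA) in q3.
  have [_ [hdis hanti]] := hG _ p1 p2.
  have e := hanti C C' p3 q3 hsub.
  have := disjoint_setI0 (hdis C C' p3 q3 ne).
  move/setP/(_ (cm C)); rewrite !inE cmC /cm e.
  by rewrite /cm in cmC'; rewrite cmC'.
pose lv := fun C => (inord (lev C) : 'I_n.+1).
have lvE : forall C, C \in D -> val (lv C) = lev C.
  move=> C /DP [hC _ _ _]; rewrite /lv /= inordK // ltnS; exact: ltnW (levn C hC).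
have lvlev : forall C C', C \in D -> C' \in D -> (lv C == lv C') = (lev C == lev C').
  by move=> C C' hC hC'; rewrite -val_eqE /= !lvE.
have Mbound : forall M : {set {set {set 'I_n}}}, M \subset D ->
    (forall C C', C \in M -> C' \in M -> ~~ lt C C') -> (#|M| <= k.-1 ^ 2)%N.
  move=> M MD hM.
  have levcount : (#|lv @: M| < k)%N.
    pose rep := fun i => odflt set0 [pick C in M | lv C == i].
    have repP : forall i, i \in lv @: M -> rep i \in M /\ lv (rep i) = i.
      move=> i /imsetP [C CM ->]; rewrite /rep; case: pickP => [C' /andP [h /eqP e]|/(_ C)] //.
      by rewrite CM eqxx.
    rewrite -(@card_in_imset _ _ rep); last first.
      by move=> i j hi hj e; rewrite -(repP i hi).2 -(repP j hj).2 e.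
    apply: (@no_big_antichain n k F y _ _ cy hF).
      move=> x /imsetP [i hi ->]; have [rM _] := repP i hi.
      by have /DP [_ _ _ [_ h1 /lvl [h2 _ _]]] := subsetP MD _ rM.
    move=> C C' /imsetP [i hi ->] /imsetP [j hj ->] ne.
    have [iM ei] := repP i hi; have [jM ej] := repP j hj.
    have nij : lev (rep i) != lev (rep j).
      rewrite -lvlev ?(subsetP MD) // ei ej; apply: contraNneq ne => ->; by [].
    apply/negP => hsub.
    have /DP [_ _ _ [_ _ /lvl [_ a1 a2]]] := subsetP MD _ iM.
    have /DP [_ _ _ [_ _ /lvl [_ b1 b2]]] := subsetP MD _ jM.
    case: (ltngtP (lev (rep i)) (lev (rep j))) => hl.
    - by move: (hM _ _ iM jM); rewrite /lt hl hsub.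
    - have := lev_card_lt a1 b2 hl; rewrite ltnNge.
      by rewrite (subset_leq_card hsub).
    - by rewrite hl eqxx in nij.
  rewrite -sum1_card (partition_big_imset lv) /=.
  apply: (@leq_trans (\sum_(j in lv @: M) k.-1)).
    apply: leq_sum => j _.
    rewrite sum1dep_card -ltnS prednK; last by apply: leq_trans hk.
    apply: perlevel.
      by apply/subsetP => C; rewrite inE => /andP [/(subsetP MD)].
    move=> C C'; rewrite !inE => /andP [CM /eqP e1] /andP [C'M /eqP e2].
    by apply/eqP; rewrite -lvlev ?(subsetP MD) // e1 e2.
  rewrite sum_nat_const expnS expn1 mulnC leq_mul2l; apply/orP; right.
  by rewrite -ltnS prednK // (leq_trans _ hk).
have chainL : forall N (S : {set {set {set 'I_n}}}), (#|S| <= N)%N -> S \subset D ->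
    exists s : seq {set {set 'I_n}},
      [/\ sorted lt s, all (mem S) s & (#|S| <= k.-1 ^ 2 * size s)%N].
  elim=> [|N IH] S hSN hSD.
    by exists [::]; rewrite leqn0 in hSN; rewrite (eqP hSN).
  case: (boolP (S == set0)) => [/eqP -> | hne]; first by exists [::]; rewrite cards0.
  pose M := [set C in S | [forall C' in S, ~~ lt C C']].
  have MS : M \subset S by apply/subsetP => C; rewrite inE => /andP [].
  have above : forall x, x \in S -> exists2 m, m \in M & (m == x) || lt x m.
    move=> x xS.
    have hx : [pred C | (C \in S) && ((C == x) || lt x C)] x by rewrite /= xS eqxx.
    case: (arg_maxnP lev hx) => m /andP [mS hm] hmax.
    exists m => //; rewrite inE mS; apply/forallP => C'; apply/implyP => C'S.
    apply/negP => hmC'.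
    have hC' : [pred C | (C \in S) && ((C == x) || lt x C)] C'.
      rewrite /= C'S; case/orP: hm => [/eqP e | h].
        by rewrite -e hmC' orbT.
      by rewrite (lt_trans _ _ _ h hmC') orbT.
    have h := hmax C' hC'; case/andP: hmC' => hl _; by have := leq_ltn_trans h hl; rewrite ltnn.
  case/set0Pn: (hne) => x0 x0S.
  have [m0 m0M _] := above x0 x0S.
  have Mpos : (0 < #|M|)%N by apply/card_gt0P; exists m0.
  have cS : #|S| = (#|S :\: M| + #|M|)%N.
    by rewrite cardsD (setIidPr MS) subnK // subset_leq_card.
  have [s [srt alls cnt]] := IH (S :\: M) ltac:(lia)
     (subset_trans (subsetDl S M) hSD).
  have hM : (#|M| <= k.-1 ^ 2)%N.
    apply: Mbound; first exact: subset_trans MS hSD.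
    by move=> C C'; rewrite inE => /andP [_ /forallP h] /(subsetP MS) C'S;
      move: (h C'); rewrite C'S.
  have [m mM hm] : exists2 m, m \in M & (s == [::]) || lt (last m s) m.
    case: (lastP s) srt alls cnt => [|s1 x] _ alls _; first by exists m0.
    have : x \in S :\: M by move/allP: alls; apply; rewrite mem_rcons mem_head.
    rewrite inE => /andP [xM xS].
    have [m mM hm'] := above x xS.
    exists m => //; rewrite last_rcons; case/orP: hm' => [/eqP e|->]; last by rewrite orbT.
    by rewrite -e mM in xM.
  exists (rcons s m); split.
  - case: s srt hm {alls cnt} => [|z s] //= srt hm.
    by rewrite rcons_path srt.
  - rewrite all_rcons; apply/andP; split; first exact: (subsetP MS _ mM).
    by apply/allP => z /(allP alls) /setDP [].
  - rewrite size_rcons mulnS cS addnC; exact: leq_add.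
have [s [srt alls cnt]] := chainL #|D| D (leqnn _) (subxx _).
have k1 : (0 < k.-1)%N by rewrite -ltnS prednK // (leq_trans _ hk).
apply: (@le_trans _ _ (('C(size s, k))%:R)%R).
  apply: ext_binom_le.
  rewrite ler_pdivrMr ?ltr0n ?expn_gt0 ?k1 // -natrM ler_nat mulnC.
  exact: cnt.
rewrite ler_nat.
pose c := fun i => nth set0 s i.
have cD : forall i, (i < size s)%N -> c i \in D.
  by move=> i hi; apply: (allP alls); exact: mem_nth.
have clt : forall i j, (i < size s)%N -> (j < size s)%N -> (i < j)%N -> lt (c i) (c j).
  by move=> i j hi hj hij; apply: (sorted_ltn_nth lt_trans set0 srt).
have cinj : forall i j, (i < size s)%N -> (j < size s)%N -> c i = c j -> i = j.
  move=> i j hi hj e; case: (ltngtP i j) => // hij.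
  - by have := clt i j hi hj hij; rewrite /lt e ltnn.
  - by have := clt j i hj hi hij; rewrite /lt e ltnn.
pose T := [set t : k.-tuple 'I_(size s) | sorted ltn (map val t)].
pose phi := fun t : k.-tuple 'I_(size s) =>
  [ffun l : 'I_k => c (tnth t l)].
have Tmono : forall t, t \in T -> forall l l' : 'I_k, (l < l')%N ->
    (tnth t l < tnth t l')%N.
  move=> t; rewrite inE => ht l l' hll.
  have := sorted_ltn_nth ltn_trans 0%N ht l l'.
  rewrite !inE size_map size_tuple !ltn_ord => /(_ isT isT hll).
  by rewrite !(nth_map (tnth t l)) ?size_tuple // -!tnth_nth.
rewrite -card_ltn_sorted_tuples -/T.
rewrite -(@card_in_imset _ _ phi); last first.
  move=> t t' ht ht' e; apply: eq_from_tnth => l.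
  have := congr1 (fun f : {ffun 'I_k -> {set {set 'I_n}}} => f l) e; rewrite /phi !ffunE => e'.
  by apply: val_inj; exact: (cinj _ _ (ltn_ord _) (ltn_ord _) e').
apply: subset_leq_card; apply/subsetP => f /imsetP [t ht ->].
rewrite inE; apply: Ppb; split; last split.
- exists (fun l => lev (phi t l)); split.
    move=> l l' hll; rewrite /phi !ffunE.
    by case/andP: (clt _ _ (ltn_ord _) (ltn_ord _) (Tmono t ht l l' hll)).
  by move=> l; rewrite /phi ffunE; have /DP [hG' _ _ _] := cD _ (ltn_ord (tnth t l)); exact: levP.
- by move=> l; rewrite /phi ffunE; have /DP [_ hy _ _] := cD _ (ltn_ord (tnth t l)).
- move=> l l'; rewrite leq_eqVlt => /orP [/eqP e|hll].
    by have -> : l = l' by apply: val_inj.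
  rewrite /phi !ffunE.
  by case/andP: (clt _ _ (ltn_ord _) (ltn_ord _) (Tmono t ht l l' hll)).
Qed.
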